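(* For every $\alpha\in(0,\pi/2]$, the system of two equations in the real unknowns $(d,u_1)$ $$18(4\cos\alpha-3)u_1^2+3d(d^2-10)\Big(\cos\tfrac{\alpha}{2}-2\cos\tfrac{3\alpha}{2}\Big)u_1+\cos^2\tfrac{\alpha}{2}\Big(-3d^6+18d^4-34d^2-420+4d^2(d^4-6d^2+30)\cos\alpha\Big)=0,$$ $$36\Big(3\sin\tfrac{3\alpha}{2}-11\sin\tfrac{\alpha}{2}\Big)u_1^2+6\sin\tfrac{\alpha}{2}\Big(5\cos\tfrac{\alpha}{2}-3\cos\tfrac{3\alpha}{2}\Big)d(d^2-10)u_1+\Big(840\alpha-8d^2(d^4-6d^2+30)\sin\alpha+d^2(3d^4-18d^2+34)\sin(2\alpha)\Big)\cos\tfrac{\alpha}{2}=0$$ has no real solutions.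
   Context: This system arises in interpolating the $G^2$ data and arc length of a circular arc of inner angle $2\alpha$ by a planar Pythagorean-hodograph curve of degree $7$, in the case $u_2=-u_1+\frac16 d(d^2-10)\cos(\alpha/2)$ of the non-symmetric preimage coefficients; only the explicit equations above are needed. *)

(* Defs.v *)
From Stdlib Require Import Reals.
Open Scope R_scope.

(* Main.v *)
Require Import Defs.
From Stdlib Require Import Reals Lra Psatz.
Open Scope R_scope.

Lemma final_ineq (a S C p : R) : 0 < a -> a <= 2 -> 0 <= C -> S*S + C*C = 1 -> 0 < S ->
 a - a^3/6 <= S -> S <= a - a^3/6 + a^5/120 -> 1 - a^2/2 <= C -> C <= 1 - a^2/2 + a^4/24 -> 0 <= p ->
 448*S*(1-C^2)*p - 840*S*(4-3*C) + 840*(4*C-3)*a = 0 ->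
 1680*a - 7/2*S*((4-3*C)*p^3 - 4*(4-3*C)*p^2 + (80+4*C)*p) >= 0 -> False.
Proof.
  intros ha ha2 hC hSC hS hSl hSu hCl hCu hp hR hF.
  assert (hx' : exists x, x = a*a) by eauto. destruct hx' as [x hx].
  assert (hCh' : exists Ch, Ch = 1 - a^2/2 + a^4/24) by eauto. destruct hCh' as [Ch hChd].
  rewrite <- hChd in hCu.
  assert (hx0 : 0 < x) by nra.
  assert (hx4 : x <= 4) by nra.
  assert (hCh : Ch = 1 - x/2 + x*x/24) by (rewrite hChd, hx; field).
  assert (hCh0 : 0 <= Ch) by lra.
  assert (hx25 : x <= 254/100) by nra.
  assert (hSa : S <= a).
  { assert (a^3/6 - a^5/120 = a*x*(20 - x)/120) by (rewrite hx; field).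
    assert (0 <= a*x*(20-x)) by (apply Rmult_le_pos; nra). lra. }
  assert (hN' : exists N, N = S*(4-3*C) - (4*C-3)*a) by eauto. destruct hN' as [N hNd].
  assert (hf : (20+C)*N - 64*a*S^2 > 0).
  { assert (E0 : (20+C)*N - 64*a*S^2 = (80 - 56*C - 3*C^2)*S - a*(-60*C^2+77*C+4)).
    { rewrite hNd. replace (S^2) with (1 - C^2) by nra. ring. }
    rewrite E0.
    assert (E1 : (80 - 56*C - 3*C^2)*S - a*(-60*C^2+77*C+4)
      - ((80 - 56*Ch - 3*Ch^2)*S - a*(-60*Ch^2+77*Ch+4))
      = (C - Ch) * (-56*S - 77*a + (C+Ch)*(60*a-3*S))) by ring.
    assert (hbr : -56*S - 77*a + (C+Ch)*(60*a-3*S) <= 0).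
    { assert ((C+Ch)*(60*a-3*S) <= (C+Ch)*(60*a)) by nra.
      assert ((C+Ch)*(60*a) <= 120*Ch*a) by nra.
      assert (-56*(a - a^3/6) - 77*a + 120*Ch*a = a*(5*x*x - (152/3)*x - 13)) by (rewrite hCh, hx; field).
      assert (a*(5*x*x - (152/3)*x - 13) <= 0) by nra.
      nra. }
    assert (hd1 : (C - Ch) * (-56*S - 77*a + (C+Ch)*(60*a-3*S)) >= 0) by nra.
    assert (hA : 0 < 80 - 56*Ch - 3*Ch^2) by nra.
    assert (hd2 : (80 - 56*Ch - 3*Ch^2)*S >= (80 - 56*Ch - 3*Ch^2)*(a - a^3/6)) by nra.
    assert (hq : (80 - 56*Ch - 3*Ch^2)*(a - a^3/6) - a*(-60*Ch^2+77*Ch+4)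
       = a*x*(6 + 199/24*x - 131/72*x^2 + 5/64*x^3 + x^4/1152)) by (rewrite hCh, hx; field).
    assert (0 < 6 + 199/24*x - 131/72*x^2 + 5/64*x^3 + x^4/1152).
    { assert (0 <= x*(199/24 - 131/72*x)) by (apply Rmult_le_pos; lra).
      assert (0 <= x^3) by (apply pow_le; lra).
      assert (0 <= x^4) by (apply pow_le; lra).
      assert (x^2 = x*x) by ring. nra. }
    assert (0 < a*x*(6 + 199/24*x - 131/72*x^2 + 5/64*x^3 + x^4/1152)) by (apply Rmult_lt_0_compat; [apply Rmult_lt_0_compat|]; lra).
    nra. }
  assert (hS2 : 1 - C^2 = S^2) by nra.
  rewrite hS2 in hR.
  assert (hRN : 8*S^3*p = 15*N) by (rewrite hNd; nra).
  assert (hN : N*21 > 64*S^3).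
  { assert (64*a*S^2 >= 64*S*S^2).
    { assert (0 <= S^2) by (apply pow_le; lra). nra. }
    assert (C <= 1) by nra.
    assert (N > 0).
    { destruct (Rle_or_lt N 0) as [hn|hn]; [|lra].
      assert ((20+C)*N <= 0) by nra. assert (0 <= a*S^2) by (apply Rmult_le_pos; [lra| apply pow_le; lra]). lra. }
    assert (21*N >= (20+C)*N) by nra.
    assert (S^3 = S*S^2) by ring. lra. }
  assert (hp4 : p > 4).
  { assert (0 < S^3) by (apply pow_lt; lra).
    destruct (Rle_or_lt p 4) as [hq|hq]; [|lra].
    assert (S^3*p <= S^3*4) by (apply Rmult_le_compat_l; lra). lra. }
  assert (hcub : (4-3*C)*p^3 - 4*(4-3*C)*p^2 >= 0).
  { replace ((4-3*C)*p^3 - 4*(4-3*C)*p^2) with ((4-3*C)*(p*p)*(p-4)) by ring.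
    assert (C <= 1) by nra. apply Rle_ge. apply Rmult_le_pos; [apply Rmult_le_pos; [lra| apply Rmult_le_pos; lra] | lra]. }
  assert (hF2 : 480*a >= S*(80+4*C)*p) by nra.
  assert (3840*a*S^2 >= 8*S^3*(80+4*C)*p) by nra.
  nra.
Qed.

Theorem mainTheorem3 :
  forall alpha : R, 0 < alpha <= PI / 2 ->
  ~ (exists d u1 : R,
      18 * (4 * cos alpha - 3) * u1 ^ 2
      + 3 * d * (d ^ 2 - 10) * (cos (alpha / 2) - 2 * cos (3 * alpha / 2)) * u1
      + (cos (alpha / 2)) ^ 2 *
          (- 3 * d ^ 6 + 18 * d ^ 4 - 34 * d ^ 2 - 420
           + 4 * d ^ 2 * (d ^ 4 - 6 * d ^ 2 + 30) * cos alpha) = 0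
    /\
      36 * (3 * sin (3 * alpha / 2) - 11 * sin (alpha / 2)) * u1 ^ 2
      + 6 * sin (alpha / 2) * (5 * cos (alpha / 2) - 3 * cos (3 * alpha / 2))
          * d * (d ^ 2 - 10) * u1
      + (840 * alpha - 8 * d ^ 2 * (d ^ 4 - 6 * d ^ 2 + 30) * sin alpha
         + d ^ 2 * (3 * d ^ 4 - 18 * d ^ 2 + 34) * sin (2 * alpha))
        * cos (alpha / 2) = 0).
Proof.
  intros al [h0 h1] [d [u [E1 E2]]].
  pose proof PI_4 as hpi4.
  pose proof PI2_1 as hpi1.
  assert (hc : 0 < cos (al/2)) by (apply cos_gt_0; lra).
  assert (hs : 0 < sin (al/2)) by (apply sin_gt_0; lra).
  assert (hsc : sin (al/2) * sin (al/2) + cos (al/2) * cos (al/2) = 1).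
  { pose proof (sin2_cos2 (al/2)) as e. unfold Rsqr in e. lra. }
  assert (hal : al = 2 * (al/2)) by field.
  assert (hca : cos al = 2 * cos (al/2) * cos (al/2) - 1).
  { rewrite hal at 1. apply cos_2a_cos. }
  assert (hsa : sin al = 2 * sin (al/2) * cos (al/2)).
  { rewrite hal at 1. apply sin_2a. }
  assert (h3 : 3 * al / 2 = al + al/2) by field.
  assert (hc3 : cos (3 * al / 2) = 4 * cos (al/2)^3 - 3 * cos (al/2)).
  { rewrite h3, cos_plus, hca, hsa. nra. }
  assert (hs3 : sin (3 * al / 2) = sin (al/2) * (4 * cos (al/2)^2 - 1)).
  { rewrite h3, sin_plus, hca, hsa. ring. }
  assert (hs2a : sin (2 * al) = 4 * sin (al/2) * cos (al/2) * (2 * cos (al/2) ^2 - 1)).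
  { rewrite sin_2a, hca, hsa. ring. }
  rewrite hca, hc3 in E1.
  rewrite hs3, hc3, hsa, hs2a in E2.
  set (c := cos (al/2)) in *.
  set (s := sin (al/2)) in *.
  set (p := d^2).
  set (t := d*(d^2-10)).
  set (K := 7 - 6*c^2).
  set (RR := 3584*s*c^3*(1-c^2)*p - 1680*s*c*K + 840*(8*c^2-7)*al).
  set (F := 1680*al - 7*s*c*(K*p^3 - 4*K*p^2 + (8*c^2+76)*p)).
  assert (eR : c * RR = 4*s*K*(18 * (4 * (2 * c * c - 1) - 3) * u ^ 2
      + 3 * d * (d ^ 2 - 10) * (c - 2 * (4 * c ^ 3 - 3 * c)) * u
      + c ^ 2 * (- 3 * d ^ 6 + 18 * d ^ 4 - 34 * d ^ 2 - 420
           + 4 * d ^ 2 * (d ^ 4 - 6 * d ^ 2 + 30) * (2 * c * c - 1)))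
      + (8*c^2-7)*(36 * (3 * (s * (4 * c ^ 2 - 1)) - 11 * s) * u ^ 2
      + 6 * s * (5 * c - 3 * (4 * c ^ 3 - 3 * c)) * d * (d ^ 2 - 10) * u
      + (840 * al - 8 * d ^ 2 * (d ^ 4 - 6 * d ^ 2 + 30) * (2 * s * c)
         + d ^ 2 * (3 * d ^ 4 - 18 * d ^ 2 + 34) * (4 * s * c * (2 * c ^ 2 - 1))) * c)).
  { unfold RR, K, p. ring. }
  rewrite E1, E2 in eR.
  assert (hR0 : RR = 0).
  { nra. }
  assert (eF : c * F = 2 * (36 * (3 * (s * (4 * c ^ 2 - 1)) - 11 * s) * u ^ 2
      + 6 * s * (5 * c - 3 * (4 * c ^ 3 - 3 * c)) * d * (d ^ 2 - 10) * u
      + (840 * al - 8 * d ^ 2 * (d ^ 4 - 6 * d ^ 2 + 30) * (2 * s * c)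
         + d ^ 2 * (3 * d ^ 4 - 18 * d ^ 2 + 34) * (4 * s * c * (2 * c ^ 2 - 1))) * c)
      + s*K*(12*u - c*t)^2).
  { unfold F, K, p, t. ring. }
  rewrite E2 in eF.
  assert (hF0 : F >= 0).
  { assert (0 <= K) by (unfold K; nra).
    assert (0 <= s*K*(12*u - c*t)^2).
    { apply Rmult_le_pos; [apply Rmult_le_pos; lra| apply pow2_ge_0]. }
    destruct (Rle_or_lt 0 F) as [hh|hh]; [lra|].
    assert (c*F < 0) by (apply Rmult_pos_neg; lra). lra. }
  pose proof (sin_bound al 0 ltac:(lra) ltac:(lra)) as hsb.
  pose proof (cos_bound al 0 ltac:(lra) ltac:(lra)) as hcb.
  unfold sin_approx, cos_approx in *. simpl in hsb, hcb. unfold sin_term, cos_term in *. simpl in hsb, hcb.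
  apply (final_ineq al (2*s*c) (2*c*c-1) p).
  - lra.
  - lra.
  - rewrite <- hca. apply cos_ge_0; lra.
  - nra.
  - nra.
  - rewrite <- hsa. destruct hsb as [hh _]. eapply Rle_trans; [|exact hh]. right; field.
  - rewrite <- hsa. destruct hsb as [_ hh]. eapply Rle_trans; [exact hh|]. right; field.
  - rewrite <- hca. destruct hcb as [hh _]. eapply Rle_trans; [|exact hh]. right; field.
  - rewrite <- hca. destruct hcb as [_ hh]. eapply Rle_trans; [exact hh|]. right; field.
  - unfold p. apply pow2_ge_0.
  - rewrite <- hR0. unfold RR, K. ring.
  - unfold F, K in hF0. replace (1680 * al - 7 / 2 * (2 * s * c) *
   ((4 - 3 * (2 * c * c - 1)) * p ^ 3 - 4 * (4 - 3 * (2 * c * c - 1)) * p ^ 2 +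
    (80 + 4 * (2 * c * c - 1)) * p)) with (1680 * al - 7 * s * c * ((7 - 6 * c ^ 2) * p ^ 3 - 4 * (7 - 6 * c ^ 2) * p ^ 2 + (8 * c ^ 2 + 76) * p)) by field.
    exact hF0.
Qed.
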